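(* Let $G$ be a finite abelian group and let $f$ be an automorphism of $\mathcal{P}_{0}(G)$ with pullback $g$. Then for every nonzero $a\in G$ and every $n\in\mathbb{N}$ we have $\operatorname{ord}(a)=\operatorname{ord}(g(a))$ and $g(na)=ng(a)$.
   Context: For an additively written finite abelian group $G$, $\mathcal{P}_{0}(G)$ is the monoid of all subsets of $G$ containing $0$, with setwise addition and identity $\{0\}$. Every automorphism $f$ of $\mathcal{P}_0(G)$ maps $2$-element sets to $2$-element sets; the pullback of $f$ is the bijection $g:G\to G$ defined by $g(0)=0$ and, for nonzero $a\in G$, by $f(\{0,a\})=\{0,g(a)\}$. $\mathbb{N}$ is the set of positive integers. *)

(* Defs.v *)
From HB Require Import structures.
From mathcomp Require Import all_boot all_order all_algebra all_fingroup.
Set Implicit Arguments. Unset Strict Implicit. Unset Printing Implicit Defensive.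
Import GRing.Theory.
Local Open Scope ring_scope.

Definition setadd (G : finZmodType) (A B : {set G}) : {set G} :=
  [set a + b | a in A, b in B].

Definition P0 (G : finZmodType) : {pred {set G}} := fun A => 0 \in A.
Arguments P0 : clear implicits.

(* f : {set G} -> {set G} is an automorphism of the monoid P_0(G)
   (the values of f outside P_0(G) are irrelevant): f maps P_0(G) into
   P_0(G), is a bijection of P_0(G), preserves setwise addition and the
   identity {0}. *)
Definition P0_automorphism (G : finZmodType) (f : {set G} -> {set G}) : Prop :=
  [/\ {in P0 G, forall A, f A \in P0 G},
      {in P0 G &, injective f},
      {in P0 G, forall B, exists2 A, A \in P0 G & f A = B},
      {in P0 G &, forall A B, f (setadd A B) = setadd (f A) (f B)}
    & f [set 0] = [set 0]].

Definition pullback (G : finZmodType) (f : {set G} -> {set G}) (g : G -> G) : Prop :=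
  g 0 = 0 /\ forall a : G, a != 0 -> f [set 0; a] = [set 0; g a].

(* Main.v *)
Require Import Defs.
From HB Require Import structures.
From mathcomp Require Import all_boot all_order all_algebra all_fingroup all_solvable.
From mathcomp Require Import zify.
Import GRing.Theory FinRing.Theory.
Local Open Scope ring_scope.
Set Implicit Arguments. Unset Strict Implicit.

Section S.
Variable G : finZmodType.
Implicit Types x y : G.

Lemma mulrn_eq_mod x i j : (x *+ i == x *+ j) = (i == j %[mod #[x]%g])%N.
Proof. by rewrite -!zmodXgE eq_expg_mod_order. Qed.

Lemma mulrn_order x : x *+ #[x]%g = 0.
Proof. by rewrite -zmodXgE expg_order. Qed.

Lemma mulrn_modo x i : x *+ (i %% #[x]%g) = x *+ i.
Proof. by rewrite -!zmodXgE expg_mod_order. Qed.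

Definition S x k : {set G} := [set x *+ (val i) | i : 'I_k.+1].

Lemma memSP x k y : reflect (exists2 i, (i <= k)%N & y = x *+ i) (y \in S x k).
Proof.
apply: (iffP imsetP) => [[i _ ->]|[i hi ->]]; first by exists i; rewrite // -ltnS.
by exists (Ordinal (hi : (i < k.+1)%N)).
Qed.

Lemma S0in x k : 0 \in S x k.
Proof. by apply/memSP; exists 0%N; rewrite ?mulr0n. Qed.

Lemma S_0 x : S x 0 = [set 0].
Proof.
apply/setP => y; rewrite inE; apply/memSP/eqP => [[i]|->]; last by exists 0%N.
by rewrite leqn0 => /eqP -> ->.
Qed.

Lemma S_succ x k : S x k.+1 = setadd (S x k) [set 0; x].
Proof.
apply/setP => y; apply/memSP/imset2P.
  case=> i; rewrite leq_eqVlt => /orP[/eqP ->|hi] ->.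
    by exists (x *+ k) x; rewrite ?inE ?eqxx ?orbT -?mulrSr //; apply/memSP; exists k.
  by exists (x *+ i) 0; rewrite ?inE ?eqxx ?addr0 //; apply/memSP; exists i.
case=> u v /memSP[i hi ->]; rewrite !inE => /orP[]/eqP -> ->.
  by exists i; rewrite ?addr0 // (leq_trans hi).
by exists i.+1; rewrite ?mulrSr.
Qed.

Lemma S_full x i : x *+ i \in S x (#[x]%g).-1%N.
Proof.
apply/memSP; exists (i %% #[x]%g)%N; last by rewrite mulrn_modo.
by rewrite -ltnS prednK ?order_gt0 // ltn_mod order_gt0.
Qed.

Lemma S_mono x k l : (k <= l)%N -> S x k \subset S x l.
Proof. move=> kl; apply/subsetP=> y /memSP[i hi ->]; apply/memSP; exists i => //; exact: leq_trans kl. Qed.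

Lemma S_stable x k : (S x k == S x k.+1) = (#[x]%g <= k.+1)%N.
Proof.
have m0 := order_gt0 x.
apply/eqP/idP => [E|hm].
  rewrite leqNgt; apply/negP => hk.
  have : x *+ k.+1 \in S x k by rewrite E; apply/memSP; exists k.+1.
  case/memSP=> i hi /eqP; rewrite mulrn_eq_mod => /eqP.
  have h2 : (i < #[x]%g)%N by apply: leq_ltn_trans hk; apply: leq_trans hi _.
  rewrite !modn_small //; lia.
apply/eqP; rewrite eqEsubset S_mono //=.
apply/subsetP=> y /memSP[i hi ->]; apply/memSP; exists (i %% #[x]%g)%N; last by rewrite mulrn_modo.
by rewrite -ltnS (leq_trans _ hm) // ltn_mod.
Qed.
End S.


Lemma mod2 (a b m : nat) : a = b %[mod m] -> (a < m.*2)%N -> (b < m)%N -> a = b \/ a = (b + m)%N.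
Proof.
move=> + ha hb; have [am|ma] := ltnP a m.
  by rewrite !modn_small // => ->; left.
have -> : a = ((a - m) + m)%N by rewrite subnK.
rewrite modnDr !modn_small //; first by move=> ->; right.
by move: ha; rewrite -addnn; lia.
Qed.

Lemma mulrn_eqm (G : finZmodType) (y : G) a b : y *+ a = y *+ b -> a = b %[mod #[y]%g].
Proof. by move/eqP; rewrite mulrn_eq_mod => /eqP. Qed.

Lemma uniqA (G : finZmodType) (y c : G) p : ((p.+1).*2 <= #[y]%g)%N ->
  setadd (S y p) [set 0; c] = S y (p.*2.+1) -> c = y *+ p.+1.
Proof.
move=> hm E.
have hm' : (p.*2.+1 < #[y]%g)%N by [].
have [j hj Ec] : exists2 j, (j <= p.*2.+1)%N & c = y *+ j.
  have : c \in S y (p.*2.+1) by rewrite -E; apply/imset2P; exists 0 c; rewrite ?S0in ?inE ?eqxx ?orbT ?add0r.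
  by case/memSP=> j hj ->; exists j.
have memR z : (z \in S y (p.*2.+1)) -> exists2 i, (i <= p)%N & z = y *+ i \/ z = y *+ i + c.
  rewrite -E => /imset2P[u v /memSP[i hi ->]]; rewrite !inE => /orP[]/eqP -> ->.
    by exists i => //; left; rewrite addr0.
  by exists i => //; right.
rewrite {}Ec in memR *.
have hj2 : (p.+1 <= j)%N.
  have [|i hi [/mulrn_eqm|]] := memR (y *+ p.*2.+1); first by apply/memSP; exists p.*2.+1.
    by rewrite !modn_small //; lia.
  rewrite -mulrnDr => /mulrn_eqm /esym h.
  by move: (mod2 h) => /(_ ltac:(lia) ltac:(lia)) [h'|h']; lia.
have [|i hi [/mulrn_eqm|]] := memR (y *+ p.+1); first by apply/memSP; exists p.+1 => //; lia.
  by rewrite !modn_small //; lia.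
rewrite -mulrnDr => /mulrn_eqm /esym h.
by move: (mod2 h) => /(_ ltac:(lia) ltac:(lia)) [h'|h']; [congr (_ *+ _); lia | lia].
Qed.


Lemma S_shift (G : finZmodType) (x : G) p : setadd (S x p) [set 0; x *+ p.+1] = S x (p.*2.+1).
Proof.
apply/setP => z; apply/imset2P/memSP.
  case=> u v /memSP[i hi ->]; rewrite !inE => /orP[]/eqP -> ->.
    by exists i; rewrite ?addr0 //; lia.
  by exists (i + p.+1)%N; rewrite ?mulrnDr //; lia.
case=> k hk ->; have [kp|pk] := leqP k p.
  by exists (x *+ k) 0; rewrite ?addr0 ?inE ?eqxx //; apply/memSP; exists k.
exists (x *+ (k - p.+1)) (x *+ p.+1); rewrite ?inE ?eqxx ?orbT //.
  by apply/memSP; exists (k - p.+1)%N => //; lia.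
by rewrite -mulrnDr subnK.
Qed.


Lemma neg_mul (G : finZmodType) (x : G) r : (r <= #[x]%g)%N -> x *+ r = (-x) *+ (#[x]%g - r).
Proof.
move=> hr; rewrite mulNrn; apply/eqP; rewrite -addr_eq0 -mulrnDr subnKC //.
by rewrite mulrn_order.
Qed.



Lemma ordN (G : finZmodType) (x : G) : #[- x]%g = #[x]%g.
Proof. by rewrite -zmodVgE orderV. Qed.

Lemma neg_in_full (G : finZmodType) (x : G) i : - (x *+ i) \in S x (#[x]%g).-1.
Proof.
have -> : - (x *+ i) = x *+ (i * (#[x]%g).-1).
  apply/eqP; rewrite eq_sym -addr_eq0 -mulrnDr.
  rewrite -{2}(muln1 i) -mulnDr addn1 prednK ?order_gt0 //.
  by rewrite mulnC mulrnA mulrn_order mul0rn.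
exact: S_full.
Qed.

Lemma S_neg (G : finZmodType) (x : G) : S (-x) (#[x]%g).-1 = S x (#[x]%g).-1.
Proof.
apply/setP=> z; apply/memSP/memSP.
  case=> i hi ->; rewrite mulNrn; exact/memSP/neg_in_full.
case=> i hi ->; rewrite -[x *+ i]opprK -mulNrn -(ordN x); exact/memSP/neg_in_full.
Qed.

Lemma S_fullD (G : finZmodType) (x u v : G) : u \in S x (#[x]%g).-1 -> v \in S x (#[x]%g).-1 ->
  u + v \in S x (#[x]%g).-1 /\ u - v \in S x (#[x]%g).-1.
Proof.
move=> /memSP[i _ ->] /memSP[j _ ->]; split; first by rewrite -mulrnDr S_full.
have /memSP[k _ ->] := neg_in_full x j; by rewrite -mulrnDr S_full.
Qed.

Section F.
Variables (G : finZmodType) (f : {set G} -> {set G}) (g : G -> G).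
Hypotheses (hf : P0_automorphism f) (hg : pullback f g).
Implicit Types x y : G.

Lemma P0E (A : {set G}) : (A \in P0 G) = (0 \in A).
Proof. by []. Qed.

Lemma fpair x : f [set 0; x] = [set 0; g x].
Proof.
case: hg => g0 hg'; have [->|/hg' //] := eqVneq x 0.
by rewrite g0 setUid; case: hf.
Qed.

Lemma setadd_P0 (A B : {set G}) : 0 \in A -> 0 \in B -> 0 \in setadd A B.
Proof. by move=> hA hB; apply/imset2P; exists 0 0; rewrite ?addr0. Qed.

Lemma fS x k : f (S x k) = S (g x) k.
Proof.
elim: k => [|k IH]; first by rewrite !S_0; case: hf.
case: hf => _ _ _ hadd _.
rewrite !S_succ hadd ?P0E ?S0in ?inE ?eqxx // IH fpair //.
Qed.

Lemma finj (A B : {set G}) : 0 \in A -> 0 \in B -> f A = f B -> A = B.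
Proof. by case: hf => _ hi _ _ _ hA hB; apply: hi. Qed.

Lemma ord_eq x : #[x]%g = #[g x]%g.
Proof.
have key k : (#[x]%g <= k.+1)%N = (#[g x]%g <= k.+1)%N.
  rewrite -!S_stable -!fS; apply/eqP/eqP => [->//|]; apply: finj; exact: S0in.
have h1 := order_gt0 x; have h2 := order_gt0 (g x).
have := key (#[x]%g).-1; have := key (#[g x]%g).-1.
rewrite !prednK // !leqnn => A B; apply/eqP; rewrite eqn_leq; apply/andP; split; [by rewrite A | by rewrite -B].
Qed.

Lemma claimA x p : ((p.+1).*2 <= #[x]%g)%N -> g (x *+ p.+1) = g x *+ p.+1.
Proof.
move=> hm; apply: uniqA; first by rewrite -ord_eq.
case: hf => _ _ _ hadd _.
by rewrite -fS -fpair -hadd ?P0E ?S0in ?inE ?eqxx // S_shift fS.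
Qed.

Lemma gneg x : x != 0 -> g (- x) = - g x.
Proof.
move=> x0.
case: hf => _ _ _ hadd _.
have m0 := order_gt0 x.
have m1 : (#[x]%g != 1)%N by rewrite order_eq1.
have [m2|m3] := leqP #[x]%g 2%N.
  have em : #[x]%g = 2%N by lia.
  have Nx (u : G) : #[u]%g = 2%N -> - u = u.
    move=> hu; apply/eqP; rewrite eq_sym -addr_eq0 -mulr2n.
    by rewrite -hu mulrn_order.
  by rewrite Nx // Nx // -ord_eq.
set m := #[x]%g in m0 m1 m3.
have [q em] : exists q, m = q.+3 by exists (m - 3)%N; lia.
set y := g x; set z := g (- x).
have oy : #[y]%g = m by rewrite -ord_eq.
have oz : #[z]%g = m by rewrite -ord_eq ordN.
have EW : S y q.+2 = S z q.+2.
  rewrite -fS -fS; congr f.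
  have := S_neg x; by rewrite -/m em.
pose T := setadd [set 0; x] (S (-x) q).
have fT : f T = setadd [set 0; y] (S z q).
  by rewrite hadd ?P0E ?S0in ?inE ?eqxx // fpair fS.
have T0 : 0 \in T by apply: setadd_P0; rewrite ?S0in ?inE ?eqxx.
have TW : T != S x q.+2.
  apply/negP => /eqP ET.
  have : x *+ 2 \in T by rewrite ET; apply/memSP; exists 2%N.
  case/imset2P => u v; rewrite !inE => /orP[]/eqP -> /memSP[i hi ->]; rewrite mulNrn => E.
    have : x *+ (2 + i) = x *+ 0 by rewrite mulrnDr E add0r addNr mulr0n.
    move/eqP; rewrite mulrn_eq_mod mod0n modn_small -/m; lia.
  have : x *+ (2 + i) = x *+ 1 by rewrite mulrnDr E mulr1n subrK.
  move/eqP; rewrite mulrn_eq_mod !modn_small -/m; lia.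
have fTW : f T != S y q.+2.
  apply/negP => /eqP E; move/negP: TW; apply; apply/eqP; apply: finj => //; first exact: S0in.
  by rewrite E fS.
have Wfull : S z q.+2 = S z (#[z]%g).-1 by rewrite oz em.
have yW : y \in S z q.+2 by rewrite -EW; apply/memSP; exists 1%N; rewrite ?mulr1n.
have Sq : S z q \subset S z q.+2 by apply: S_mono; lia.
have fTsub : f T \subset S y q.+2.
  rewrite fT EW; apply/subsetP => w /imset2P[u v]; rewrite !inE => /orP[]/eqP -> hv ->.
    by rewrite add0r; apply: (subsetP Sq) hv.
  rewrite Wfull; apply: (S_fullD _ _).1; rewrite -Wfull //.
  exact: (subsetP Sq) hv.
have : ~~ (S y q.+2 \subset f T).
  by apply/negP => h; move/negP: fTW; apply; rewrite eqEsubset h fTsub.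
case/subsetPn => t; rewrite EW => tW tnT.
have notS w : w \in S z q.+2 -> w \notin S z q -> w = z *+ q.+1 \/ w = z *+ q.+2.
  case/memSP=> i hi -> hn.
  have : (q < i)%N by rewrite ltnNge; apply/negP => h; move/negP: hn; apply; apply/memSP; exists i.
  move=> h; have [->|->] : i = q.+1 \/ i = q.+2 by lia.
  by left. by right.
have ht : t \notin S z q.
  apply/negP => h; move/negP: tnT; apply; rewrite fT; apply/imset2P; exists 0 t; rewrite ?inE ?eqxx ?add0r //.
have tyW : t - y \in S z q.+2 by rewrite Wfull; apply: (S_fullD _ _).2; rewrite -Wfull.
have hty : t - y \notin S z q.
  apply/negP => h; move/negP: tnT; apply; rewrite fT; apply/imset2P; exists y (t - y); rewrite ?inE ?eqxx ?orbT //.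
  by rewrite addrC subrK.
have ey : y = t - (t - y) by rewrite opprB addrC subrK.
have y0 : y != 0 by rewrite -order_eq1 oy em.
have [et|et] := notS t tW ht; have [ety|ety] := notS _ tyW hty.
- by move: y0; rewrite ey ety et subrr eqxx.
- move: ey; rewrite ety et [z *+ q.+2]mulrS opprD addrCA subrr addr0 => ->; by rewrite opprK.
- move: ey; rewrite ety et [z *+ q.+2]mulrS addrK => yz.
  have : [set 0; x] = [set 0; - x].
    apply: finj; rewrite ?inE ?eqxx //; by rewrite !fpair -/y -/z yz.
  move/setP/(_ x); rewrite !inE eqxx orbT (negPf x0) /= => /esym /eqP E.
  have : x *+ 2 = x *+ 0 by rewrite mulr2n {1}E addNr mulr0n.
  move/eqP; rewrite mulrn_eq_mod mod0n modn_small -/m; lia.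
- by move: y0; rewrite ey ety et subrr eqxx.
Qed.

End F.

Theorem lemma2p5 (G : finZmodType) (f : {set G} -> {set G}) (g : G -> G) :
  P0_automorphism f -> pullback f g ->
  forall a : G, a != 0 ->
    #[a]%g = #[g a]%g /\ (forall n : nat, (0 < n)%N -> g (a *+ n) = (g a) *+ n).
Proof.
move=> hf hg a a0; have oe := ord_eq hf hg a; split => // n n0.
rewrite -(mulrn_modo a) -(mulrn_modo (g a) n) -oe.
have rm : (n %% #[a]%g < #[a]%g)%N by rewrite ltn_mod order_gt0.
move: rm; set r := (n %% #[a]%g)%N => rm.
case: r rm => [|p] rm; first by rewrite !mulr0n; case: hg => ->.
have [h|h] := leqP (p.+1).*2 #[a]%g; first exact: (claimA hf hg).
rewrite (neg_mul (x := a) (ltnW rm)) (neg_mul (x := g a) (r := p.+1)) -?oe; last exact: ltnW.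
have [p' ep] : exists p', (#[a]%g - p.+1 = p'.+1)%N by exists (#[a]%g - p.+2)%N; lia.
rewrite ep (claimA hf hg); first by rewrite (gneg hf hg).
by rewrite ordN -ep; lia.
Qed.
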